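(* Let $L_1,L_2,L_3$ be lines of the spine space $\mathfrak M$ which are pairwise coplanar, whose closures $\overline{L_1},\overline{L_2},\overline{L_3}$ have a common point (proper or improper; i.e. the lines are concurrent or parallel), and which are not all contained in one plane of $\mathfrak M$. Then $L_1,L_2,L_3$ are all contained in one star or in one top of $\mathfrak M$.
   Context: Setup. Let $V$ be a vector space of finite dimension $n\ge 3$ over a division ring; $\mathrm{Sub}_j(V)$ is the set of $j$-dimensional subspaces of $V$. Fix $k$ with $1<k<n-1$, a subspace $W$ of $V$ with $w:=\dim W$, and an integer $m$ with $k-(n-w)\le m\le\min\{k,w\}$. For $H\in\mathrm{Sub}_{k-1}(V)$, $B\in\mathrm{Sub}_{k+1}(V)$, $H\subset B$, the $k$-pencil is $\mathbf p(H,B)=\{U\in\mathrm{Sub}_k(V):H\subset U\subset B\}$; the Grassmann space $\mathbf P_k(V)$ has points $\mathrm{Sub}_k(V)$ and lines the $k$-pencils. The spine space $\mathfrak M$ has point set $S=\{U\in\mathrm{Sub}_k(V):\dim(U\cap W)=m\}$ and line set $\mathcal L=\{\ell\cap S:\ell\text{ a $k$-pencil},\ |\ell\cap S|\ge2\}$; points of $\mathrm{Sub}_k(V)\setminus S$ are improper. Each $L\in\mathcal L$ lies in a unique $k$-pencil $\overline L$ (its closure); $L$ is projective if $L=\overline L$, affine if $|\overline L\setminus L|=1$. Affine lines are parallel if their closures meet in an improper point. A plane of $\mathbf P_k(V)$ is a set $\{U\in\mathrm{Sub}_k(V):Y\subset U\subset Z\}$ with $(\dim Y,\dim Z)=(k-2,k+1)$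 or $(k-1,k+2)$; a plane of $\mathfrak M$ is a set $E=P\cap S$ with $P$ a plane of $\mathbf P_k(V)$, containing two distinct lines of $\mathfrak M$; write $\overline E=P$. Lines $L_1,L_2$ are coplanar ($L_1\,\boldsymbol\pi\,L_2$) if some plane of $\mathfrak M$ contains both. The maximal strong subspaces (maximal sets of pairwise collinear points) of $\mathfrak M$ are: $\omega$-stars $\{U\in\mathrm{Sub}_k(V):H\subset U\subset H+W\}$ ($H\in\mathrm{Sub}_{k-1}(V)$, $\dim(H\cap W)=m-1$); $\alpha$-stars $\{U\in S:H\subset U\}$ ($H\in\mathrm{Sub}_{k-1}(V)$, $\dim(H\cap W)=m$); $\alpha$-tops $\{U\in\mathrm{Sub}_k(V):B\cap W\subset U\subset B\}$ ($B\in\mathrm{Sub}_{k+1}(V)$, $\dim(B\cap W)=m$); $\omega$-tops $\{U\in S:U\subset B\}$ ($B\in\mathrm{Sub}_{k+1}(V)$, $\dim(B\cap W)=m+1$). Stars are $\omega$- and $\alpha$-stars; tops are $\alpha$- and $\omega$-tops. *)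

(* Defs.v *)
From HB Require Import structures.
From mathcomp Require Import all_boot all_order all_algebra.
Set Implicit Arguments. Unset Strict Implicit. Unset Printing Implicit Defensive.
Import GRing.Theory.
Local Open Scope ring_scope.

Definition division_ring (K : unitRingType) : Prop :=
  forall x : K, x != 0 -> x \is a GRing.unit.

Section Spine.
Variables (K : unitRingType) (n : nat).

(* The n-dimensional (left) vector space V = K^n, row vectors, left scaling.
   A "subset" of V is a Prop-valued predicate. *)
Definition vsub := 'rV[K]_n -> Prop.

Definition is_subspace (X : vsub) : Prop :=
  X 0 /\ (forall x y, X x -> X y -> X (x + y)) /\
  (forall (a : K) x, X x -> X (a *: x)).

Definition incl (X Y : vsub) : Prop := forall x, X x -> Y x.
Definition sseq (X Y : vsub) : Prop := incl X Y /\ incl Y X.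
Definition scap (X Y : vsub) : vsub := fun x => X x /\ Y x.
Definition ssum (X Y : vsub) : vsub :=
  fun x => exists a b, X a /\ Y b /\ x = a + b.

Definition has_dim (X : vsub) (d : nat) : Prop :=
  is_subspace X /\
  exists v : 'I_d -> 'rV[K]_n,
    (forall i, X (v i)) /\
    (forall c : 'I_d -> K, \sum_(i < d) c i *: v i = 0 -> forall i, c i = 0) /\
    (forall x, X x -> exists c : 'I_d -> K, x = \sum_(i < d) c i *: v i).

Variables (k : nat) (W : vsub) (m : nat).

Definition in_S (U : vsub) : Prop := has_dim U k /\ has_dim (scap U W) m.

Definition pencil (H B : vsub) (U : vsub) : Prop :=
  has_dim U k /\ incl H U /\ incl U B.

Definition is_kpencil (H B : vsub) : Prop :=
  has_dim H (k - 1) /\ has_dim B (k + 1) /\ incl H B.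

Definition lineset (H B : vsub) (U : vsub) : Prop := pencil H B U /\ in_S U.

(* p(H,B) ∩ S is a line of M (it has at least two points); its closure is
   then p(H,B). *)
Definition is_Mline (H B : vsub) : Prop :=
  is_kpencil H B /\
  exists U1 U2, lineset H B U1 /\ lineset H B U2 /\ ~ sseq U1 U2.

Definition is_kplane (Y Z : vsub) : Prop :=
  incl Y Z /\
  ((has_dim Y (k - 2) /\ has_dim Z (k + 1)) \/
   (has_dim Y (k - 1) /\ has_dim Z (k + 2))).

Definition plane_pt (Y Z : vsub) (U : vsub) : Prop :=
  has_dim U k /\ incl Y U /\ incl U Z.

Definition line_in_plane (H B Y Z : vsub) : Prop :=
  forall U, lineset H B U -> plane_pt Y Z U.

Definition is_Mplane (Y Z : vsub) : Prop :=
  is_kplane Y Z /\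
  exists H B H' B',
    is_Mline H B /\ is_Mline H' B' /\
    line_in_plane H B Y Z /\ line_in_plane H' B' Y Z /\
    ~ (forall U, lineset H B U <-> lineset H' B' U).

Definition coplanar (H1 B1 H2 B2 : vsub) : Prop :=
  exists Y Z, is_Mplane Y Z /\ line_in_plane H1 B1 Y Z /\ line_in_plane H2 B2 Y Z.

(* The four kinds of maximal strong subspaces, as point sets. *)
Definition omega_star (X : vsub -> Prop) : Prop :=
  exists H : vsub, exists d : nat,
    has_dim H (k - 1) /\ has_dim (scap H W) d /\ d.+1 = m /\
    forall U, X U <-> (has_dim U k /\ incl H U /\ incl U (ssum H W)).

Definition alpha_star (X : vsub -> Prop) : Prop :=
  exists H : vsub,
    has_dim H (k - 1) /\ has_dim (scap H W) m /\
    forall U, X U <-> (in_S U /\ incl H U).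

Definition alpha_top (X : vsub -> Prop) : Prop :=
  exists B : vsub,
    has_dim B (k + 1) /\ has_dim (scap B W) m /\
    forall U, X U <-> (has_dim U k /\ incl (scap B W) U /\ incl U B).

Definition omega_top (X : vsub -> Prop) : Prop :=
  exists B : vsub,
    has_dim B (k + 1) /\ has_dim (scap B W) m.+1 /\
    forall U, X U <-> (in_S U /\ incl U B).

Definition is_star (X : vsub -> Prop) : Prop := omega_star X \/ alpha_star X.
Definition is_top (X : vsub -> Prop) : Prop := alpha_top X \/ omega_top X.

End Spine.

(* Main.v *)
Require Import Defs.
From mathcomp Require Import all_boot all_order all_algebra.
From mathcomp Require Import zify.
From Stdlib Require Import Classical.
Set Implicit Arguments. Unset Strict Implicit. Unset Printing Implicit Defensive.
Import GRing.Theory.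
Local Open Scope ring_scope.

Lemma rowdep (K : unitRingType) (divK : division_ring K) (I : finType) (d : nat) :
  forall (a : I -> 'I_d -> K) (A : {set I}), (d < #|A|)%N ->
  exists c : I -> K, (forall j, \sum_(i in A) c i * a i j = 0) /\
     exists2 i, i \in A & c i != 0.
Proof.
elim: d => [|d IH] a A hA.
  have [p pA] : exists p, p \in A.
    by apply/set0Pn; rewrite -card_gt0.
  exists (fun i => if i == p then 1 else 0); split; first by case.
  by exists p; rewrite // eqxx oner_neq0.
have H0 : forall (a : I -> 'I_d.+1 -> K) (A : {set I}), (d < #|A|)%N ->
    (forall i, i \in A -> a i ord_max = 0) ->
    exists c : I -> K, (forall j, \sum_(i in A) c i * a i j = 0) /\
     exists2 i, i \in A & c i != 0.
  move=> a' A' hA' hz.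
  have [c [hc hne]] := IH (fun i j => a' i (widen_ord (leqnSn d) j)) A' hA'.
  exists c; split => // j.
  have [jlt|jge] := ltnP j d.
    have -> : j = widen_ord (leqnSn d) (Ordinal jlt) by apply: val_inj.
    exact: hc.
  have -> : j = ord_max by apply: val_inj => /=; apply/eqP; rewrite eqn_leq jge -ltnS ltn_ord.
  by rewrite big1 // => i iA; rewrite hz // mulr0.
case: (classic (exists2 p, p \in A & a p ord_max != 0)) => [[p pA tp]|nop].
- have up : (a p ord_max) \is a GRing.unit by apply: divK.
  set t := fun i => a i ord_max * (a p ord_max)^-1.
  set a'' := fun i j => a i j - t i * a p j.
  have hA' : (d < #|A :\ p|)%N.
    by move: hA; rewrite (cardsD1 p A) pA add1n ltnS.
  have hz : forall i, i \in A :\ p -> a'' i ord_max = 0.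
    by move=> i _; rewrite /a'' /t -mulrA mulVr // mulr1 subrr.
  have [c [hc [i0 i0A ci0]]] := H0 a'' (A :\ p) hA' hz.
  exists (fun i => if i == p then - \sum_(i in A :\ p) c i * t i else c i).
  split.
    move=> j; rewrite (bigD1 p pA) /= eqxx.
    have e : \sum_(i in A | i != p) (if i == p then - \sum_(i in A :\ p) c i * t i else c i) * a i j
       = \sum_(i in A :\ p) c i * a i j.
      apply: eq_big => i; first by rewrite !inE andbC.
      by move=> /andP[_ /negbTE ->].
    rewrite e.
    have e2 : \sum_(i in A :\ p) c i * a i j = \sum_(i in A :\ p) c i * a'' i j
               + (\sum_(i in A :\ p) c i * t i) * a p j.
      rewrite mulr_suml -big_split /=; apply: eq_bigr => i _.
      by rewrite /a'' mulrBr -mulrA -addrA addNr addr0.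
    by rewrite e2 hc add0r mulNr addNr.
  exists i0; first by move: i0A; rewrite !inE => /andP[].
  by move: i0A; rewrite !inE => /andP[/negbTE -> _].
- apply: H0 => //; first exact: ltnW.
  move=> i iA; apply/eqP; apply: NNPP => h; apply: nop; exists i => //.
  by apply/negP.
Qed.


Lemma dep (K : unitRingType) (divK : division_ring K) (n d m : nat)
  (v : 'I_d -> 'rV[K]_n) (e : 'I_m -> 'rV[K]_n) : (d < m)%N ->
  (forall i, exists c : 'I_d -> K, e i = \sum_j c j *: v j) ->
  (forall c : 'I_m -> K, \sum_(i < m) c i *: e i = 0 -> forall i, c i = 0) -> False.
Proof.
move=> ltdm hs hind.
have [a ha] := fin_all_exists hs.
have hcard : (d < #|[set: 'I_m]|)%N by rewrite cardsT card_ord.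
have [c [hc [i0 _ ci0]]] := rowdep divK a hcard.
move/eqP: ci0; apply; apply: (hind c).
transitivity (\sum_(j < d) (\sum_(i in [set: 'I_m]) c i * a i j) *: v j).
  under eq_bigr do rewrite ha scaler_sumr.
  rewrite exchange_big /=; apply: eq_bigr => j _; rewrite scaler_suml.
  apply: eq_big => [i|i _]; first by rewrite in_setT.
  by rewrite scalerA.
by rewrite big1 // => j _; rewrite hc scale0r.
Qed.

Lemma mono (K : unitRingType) (divK : division_ring K) (n : nat) (A B : vsub K n) a b :
  has_dim A a -> has_dim B b -> incl A B -> (a <= b)%N.
Proof.
move=> [_ [u [uA [ui _]]]] [_ [v [_ [_ vs]]]] AB.
rewrite leqNgt; apply/negP => lt.
apply: (dep divK lt (v := v) (e := u)) => // i.
exact: vs (AB _ (uA i)).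
Qed.


Definition addline (K : unitRingType) (n : nat) (X : vsub K n) (z : 'rV[K]_n) : vsub K n :=
  fun x => exists a c, X c /\ x = c + a *: z.

Lemma sum_split (V : nmodType) d (F : 'I_d.+1 -> V) :
  \sum_(j < d.+1) F j = \sum_(j < d) F (lift ord_max j) + F ord_max.
Proof.
rewrite big_ord_recr /=; congr (_ + _); apply: eq_bigr => j _; congr F.
by apply: val_inj; rewrite /= /bump leqNgt ltn_ord.
Qed.

Definition extf (T : Type) d (f : 'I_d -> T) (z : T) (j : 'I_d.+1) : T :=
  match unlift ord_max j with Some j' => f j' | None => z end.

Lemma extf_lift T d (f : 'I_d -> T) z j : extf f z (lift ord_max j) = f j.
Proof. by rewrite /extf liftK. Qed.

Lemma extf_max T d (f : 'I_d -> T) z : extf f z ord_max = z.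
Proof. by rewrite /extf unlift_none. Qed.

Lemma addline_sub (K : unitRingType) (n : nat) (X : vsub K n) z :
  is_subspace X -> is_subspace (addline X z).
Proof.
move=> [X0 [XD XZ]]; split; first by exists 0, 0; rewrite scale0r addr0.
split.
  move=> x y [a [c [Xc ->]]] [b [e [Xe ->]]]; exists (a + b), (c + e); split; first exact: XD.
  by rewrite scalerDl addrACA.
move=> s x [a [c [Xc ->]]]; exists (s * a), (s *: c); split; first exact: XZ.
by rewrite scalerDr scalerA.
Qed.

Lemma ext (K : unitRingType) (divK : division_ring K) (n : nat) (X : vsub K n) d z :
  has_dim X d -> ~ X z -> has_dim (addline X z) d.+1.
Proof.
move=> [Xs [v [vX [vi vs]]]] nz.
have [X0 [XD XZ]] := Xs.
have Xsum : forall c : 'I_d -> K, X (\sum_i c i *: v i).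
  move=> c; elim/big_ind: _ => //; by move=> i _; apply: XZ.
split; first exact: addline_sub.
exists (extf v z); split; last split.
- move=> j; rewrite /extf; case: (unlift _ j) => [j'|].
    by exists 0, (v j'); rewrite scale0r addr0.
  by exists 1, 0; rewrite scale1r add0r.
- move=> c; rewrite sum_split.
  under eq_bigr do rewrite extf_lift.
  rewrite extf_max => h.
  have cm : c ord_max = 0.
    apply: NNPP => /eqP cn; apply: nz.
    have u : c ord_max \is a GRing.unit by apply: divK.
    have -> : z = (c ord_max)^-1 *: (- \sum_(i < d) c (lift ord_max i) *: v i).
      by rewrite -[X in - X](addrK (c ord_max *: z)) h sub0r opprK scalerA mulVr // scale1r.
    by apply: (XZ); rewrite -scaleN1r; apply: (XZ).
  move: h; rewrite cm scale0r addr0 => /vi h j.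
  rewrite /extf; case: (unliftP ord_max j) => [j' ->|->] //.
- move=> x [a [c [Xc ->]]]; have [b ->] := vs _ Xc.
  exists (extf b a); rewrite sum_split !extf_max; congr (_ + _).
  by apply: eq_bigr => j _; rewrite !extf_lift.
Qed.


Lemma addline_incl (K : unitRingType) (n : nat) (X Y : vsub K n) z :
  is_subspace Y -> incl X Y -> Y z -> incl (addline X z) Y.
Proof.
move=> [_ [YD YZ]] XY Yz x [a [c [Xc ->]]]; apply: YD; first exact: XY.
exact: YZ.
Qed.

Lemma eqdim (K : unitRingType) (divK : division_ring K) (n : nat) (X Y : vsub K n) d :
  has_dim X d -> has_dim Y d -> incl X Y -> incl Y X.
Proof.
move=> hX hY XY y Yy; apply: NNPP => nXy.
have h := ext divK hX nXy.
have := mono divK h hY (addline_incl hY.1 XY Yy).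
by rewrite ltnn.
Qed.

Lemma has_dim_eq (K : unitRingType) (n : nat) (X Y : vsub K n) d :
  has_dim Y d -> is_subspace X -> incl X Y -> incl Y X -> has_dim X d.
Proof.
move=> [_ [v [vY [vi vs]]]] Xs XY YX; split => //.
exists v; split; last split => //.
  by move=> i; apply: YX.
by move=> x /XY; apply: vs.
Qed.

Lemma full_dim (K : unitRingType) (n : nat) : has_dim (fun _ : 'rV[K]_n => True) n.
Proof.
split; first by do 2 split.
exists (fun j => 'e_j); split; first by []. split.
  move=> c h j.
  have := congr1 (fun M : 'rV[K]_n => M 0 j) h; rewrite /= summxE mxE.
  rewrite (bigD1 j) //= big1 => [|i /negbTE ij]; last first.
    by rewrite !mxE eq_sym ij andbF mulr0.
  by rewrite !mxE !eqxx mulr1 addr0.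
move=> x _; exists (fun j => x 0 j); exact: row_sum_delta.
Qed.

Lemma zero_dim (K : unitRingType) (n : nat) : has_dim (fun x : 'rV[K]_n => x = 0) 0.
Proof.
split.
  split => //; split; first by move=> x y -> ->; rewrite addr0.
  by move=> a x ->; rewrite scaler0.
exists (fun j : 'I_0 => 0); split => //; split; first by move=> c _ [].
by move=> x ->; exists (fun _ => 0); rewrite big_ord0.
Qed.

Lemma exists_dim (K : unitRingType) (divK : division_ring K) (n : nat) (X : vsub K n) :
  is_subspace X -> exists d, has_dim X d.
Proof.
move=> Xs; apply: NNPP => nd.
suff : forall j, exists Y, has_dim Y j /\ incl Y X.
  move/(_ n.+1) => [Y [hY _]].
  have := mono divK hY (full_dim K n) (fun _ _ => I).
  by rewrite ltnn.
elim=> [|j [Y [hY YX]]].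
  exists (fun x => x = 0); split; first exact: zero_dim.
  by move=> x ->; exact: Xs.1.
case: (classic (incl X Y)) => XY.
  by case: nd; exists j; apply: has_dim_eq hY Xs XY YX.
have [z hz] := not_all_ex_not _ _ XY.
have [Xz nYz] := imply_to_and _ _ hz.
exists (addline Y z); split; first exact: ext.
exact: addline_incl.
Qed.


Lemma scap_sub (K : unitRingType) (n : nat) (X Y : vsub K n) :
  is_subspace X -> is_subspace Y -> is_subspace (scap X Y).
Proof.
move=> [X0 [XD XZ]] [Y0 [YD YZ]]; split; first by split.
split; first by move=> x y [? ?] [? ?]; split; [apply: XD|apply: YD].
by move=> a x [? ?]; split; [apply: XZ|apply: YZ].
Qed.

Lemma proj_line (K : unitRingType) (n : nat) (P W : vsub K n) z x :
  is_subspace W -> W z -> W x -> addline P z x -> addline (scap P W) z x.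
Proof.
move=> [W0 [WD WZ]] Wz Wx [a [c [Pc ex]]]; exists a, c; split => //; split => //.
have -> : c = x + (-1) *: (a *: z) by rewrite ex scaleN1r addrK.
by apply: WD => //; apply: (WZ); apply: (WZ).
Qed.

Lemma fill (K : unitRingType) (divK : division_ring K) (n : nat) (H U : vsub K n) j z :
  has_dim H j -> has_dim U j.+1 -> incl H U -> U z -> ~ H z -> incl U (addline H z).
Proof.
move=> hH hU HU Uz nHz.
have h := ext divK hH nHz.
exact: (eqdim divK h hU (addline_incl hU.1 HU Uz)).
Qed.

Lemma star_dims (K : unitRingType) (divK : division_ring K) (n k m w d : nat)
   (W H U : vsub K n) :
  has_dim W w -> has_dim H (k - 1) -> (0 < k)%N -> has_dim (scap H W) d ->
  in_S k W m U -> incl H U ->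
  [/\ (d <= m)%N, (m <= d.+1)%N & (m = d.+1 -> incl U (ssum H W))].
Proof.
move=> hW hH k0 hHW [hU hUW] HU.
have hU' : has_dim U (k - 1).+1 by rewrite subn1 prednK.
have dm : (d <= m)%N.
  by apply: (mono divK hHW hUW) => x [Hx Wx]; split => //; apply: HU.
case: (classic (incl (scap U W) H)) => UWH.
  have md : (m <= d)%N.
    by apply: (mono divK hUW hHW) => x [Ux Wx]; split => //; apply: UWH.
  split => // [|e]; first exact: leqW.
  by move: md; rewrite e ltnn.
have [z hz] := not_all_ex_not _ _ UWH.
have [[Uz Wz] nHz] := imply_to_and _ _ hz.
have UHz := fill divK hH hU' HU Uz nHz.
split => //.
  have hl := ext divK hHW (fun h => nHz h.1).
  apply: (mono divK hUW hl) => x [Ux Wx].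
  exact: proj_line hW.1 Wz Wx (UHz _ Ux).
move=> _ x /UHz [a [c [Hc ->]]]; exists c, (a *: z); split => //; split => //.
exact: hW.1.2.2.
Qed.

Lemma top_dims (K : unitRingType) (divK : division_ring K) (n k m w d : nat)
   (W B U : vsub K n) :
  has_dim W w -> has_dim B (k + 1) -> has_dim (scap B W) d ->
  in_S k W m U -> incl U B ->
  [/\ (m <= d)%N, (d <= m.+1)%N & (d = m -> incl (scap B W) U)].
Proof.
move=> hW hB hBW [hU hUW] UB.
have hB' : has_dim B k.+1 by rewrite -addn1.
have md : (m <= d)%N.
  by apply: (mono divK hUW hBW) => x [Ux Wx]; split => //; apply: UB.
have sUW : incl (scap U W) (scap B W) by move=> x [Ux Wx]; split => //; apply: UB.
split => //; last first.
  move=> e; rewrite e in hBW => x hx.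
  exact: (eqdim divK hUW hBW sUW hx).1.
case: (classic (incl (scap B W) U)) => BWU.
  apply: leqW; apply: (mono divK hBW hUW) => x [Bx Wx]; split => //; apply: BWU; by split.
have [z hz] := not_all_ex_not _ _ BWU.
have [[Bz Wz] nUz] := imply_to_and _ _ hz.
have BUz := fill divK hU hB' UB Bz nUz.
have hl := ext divK hUW (fun h => nUz h.1).
apply: (mono divK hBW hl) => x [Bx Wx].
exact: proj_line hW.1 Wz Wx (BUz _ Bx).
Qed.


Lemma sseq_sym (K : unitRingType) (n : nat) (X Y : vsub K n) : sseq X Y -> sseq Y X.
Proof. by case. Qed.

Lemma sseq_trans (K : unitRingType) (n : nat) (X Y Z : vsub K n) :
  sseq X Y -> sseq Y Z -> sseq X Z.
Proof. by move=> [a b] [c d]; split => x h; [apply: c; apply: a | apply: b; apply: d]. Qed.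

Lemma distinct_pt (K : unitRingType) (divK : division_ring K) (n k : nat) (U1 U2 : vsub K n) :
  has_dim U1 k -> has_dim U2 k -> ~ sseq U1 U2 -> exists x, U2 x /\ ~ U1 x.
Proof.
move=> h1 h2 ne.
have nI : ~ incl U2 U1.
  by move=> I21; apply: ne; split => //; apply: (eqdim divK h2 h1 I21).
have [x hx] := not_all_ex_not _ _ nI.
by exists x; apply: imply_to_and.
Qed.

Lemma plane1 (K : unitRingType) (divK : division_ring K) (n k : nat) (B Z U1 U2 : vsub K n) :
  has_dim B (k + 1) -> has_dim Z (k + 1) -> has_dim U1 k -> has_dim U2 k ->
  incl U1 B -> incl U2 B -> incl U1 Z -> incl U2 Z -> ~ sseq U1 U2 -> sseq B Z.
Proof.
rewrite addn1 => hB hZ h1 h2 u1B u2B u1Z u2Z ne.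
have [x [U2x nU1x]] := distinct_pt divK h1 h2 ne.
have hS := ext divK h1 nU1x.
have SB := addline_incl hB.1 u1B (u2B _ U2x).
have SZ := addline_incl hZ.1 u1Z (u2Z _ U2x).
have BS := eqdim divK hS hB SB.
have ZS := eqdim divK hS hZ SZ.
by split => y h; [apply: SZ; apply: BS | apply: SB; apply: ZS].
Qed.

Lemma plane2 (K : unitRingType) (divK : division_ring K) (n k : nat) (A C U1 U2 : vsub K n) :
  (0 < k)%N -> has_dim A (k - 1) -> has_dim C (k - 1) -> has_dim U1 k -> has_dim U2 k ->
  incl A U1 -> incl A U2 -> incl C U1 -> incl C U2 -> ~ sseq U1 U2 -> incl C A.
Proof.
move=> k0 hA hC h1 h2 A1 A2 C1 C2 ne y Cy; apply: NNPP => nAy.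
have hS := ext divK hA nAy.
rewrite subn1 prednK // in hS.
have S1 := addline_incl h1.1 A1 (C1 _ Cy).
have S2 := addline_incl h2.1 A2 (C2 _ Cy).
have I1 := eqdim divK hS h1 S1.
have I2 := eqdim divK hS h2 S2.
by apply: ne; split => x h; [apply: S2; apply: I1 | apply: S1; apply: I2].
Qed.

Lemma rel (K : unitRingType) (divK : division_ring K) (n k m : nat) (W H B H' B' : vsub K n) :
  (0 < k)%N -> is_Mline k W m H B -> is_Mline k W m H' B' -> coplanar k W m H B H' B' ->
  sseq H H' \/ sseq B B'.
Proof.
move=> k0 [[hH [hB HB]] [U1 [U2 [l1 [l2 ne]]]]] [[hH' [hB' HB']] [U1' [U2' [l1' [l2' ne']]]]].
move=> [Y [Z [[[YZ kp] _] [L L']]]].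
have [[h1 [H1 B1]] _] := l1; have [[h2 [H2 B2]] _] := l2.
have [[h1' [H1' B1']] _] := l1'; have [[h2' [H2' B2']] _] := l2'.
have [_ [Y1 Z1]] := L _ l1; have [_ [Y2 Z2]] := L _ l2.
have [_ [Y1' Z1']] := L' _ l1'; have [_ [Y2' Z2']] := L' _ l2'.
case: kp => [[hY hZ]|[hY hZ]].
  right; apply: (@sseq_trans _ _ _ Z).
    exact: (plane1 divK hB hZ h1 h2 B1 B2 Z1 Z2 ne).
  apply: sseq_sym; exact: (plane1 divK hB' hZ h1' h2' B1' B2' Z1' Z2' ne').
left; apply: (@sseq_trans _ _ _ Y).
  split; first exact: (plane2 divK k0 hY hH h1 h2 Y1 Y2 H1 H2 ne).
  exact: (plane2 divK k0 hH hY h1 h2 H1 H2 Y1 Y2 ne).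
split; first exact: (plane2 divK k0 hH' hY h1' h2' H1' H2' Y1' Y2' ne').
exact: (plane2 divK k0 hY hH' h1' h2' Y1' Y2' H1' H2' ne').
Qed.

Unset Implicit Arguments.
Local Close Scope ring_scope.

Theorem lemma1p2 (K : unitRingType) (n k : nat) (W : vsub K n) (w m : nat)
  (H1 B1 H2 B2 H3 B3 : vsub K n) :
  division_ring K ->
  (3 <= n)%N -> (1 < k)%N -> (k < n - 1)%N ->
  has_dim W w ->
  (k + w <= m + n)%N -> (m <= minn k w)%N ->
  is_Mline k W m H1 B1 -> is_Mline k W m H2 B2 -> is_Mline k W m H3 B3 ->
  coplanar k W m H1 B1 H2 B2 ->
  coplanar k W m H1 B1 H3 B3 ->
  coplanar k W m H2 B2 H3 B3 ->
  (exists U, pencil k H1 B1 U /\ pencil k H2 B2 U /\ pencil k H3 B3 U) ->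
  ~ (exists Y Z, is_Mplane k W m Y Z /\
       line_in_plane k W m H1 B1 Y Z /\ line_in_plane k W m H2 B2 Y Z /\
       line_in_plane k W m H3 B3 Y Z) ->
  exists X : vsub K n -> Prop,
    (is_star k W m X \/ is_top k W m X) /\
    (forall U, lineset k W m H1 B1 U -> X U) /\
    (forall U, lineset k W m H2 B2 U -> X U) /\
    (forall U, lineset k W m H3 B3 U -> X U).
Proof.
move=> divK _ k1 _ hW _ _ M1 M2 M3 c12 c13 c23 _ _.
have k0 : (0 < k)%N by apply: ltnW.
have r12 := rel divK k0 M1 M2 c12.
have r13 := rel divK k0 M1 M3 c13.
have r23 := rel divK k0 M2 M3 c23.
have [U0 [_ [l0 _]]] := M1.2.
have [[pU0 [HU0 UB0]] SU0] := l0.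
have hH1 := M1.1.1; have hB1 := M1.1.2.1.
have All : (incl H1 H2 /\ incl H1 H3) \/ (incl B2 B1 /\ incl B3 B1).
  case: (classic (sseq H1 H2)) => e12; case: (classic (sseq H1 H3)) => e13.
  - by left; split; [apply: e12.1 | apply: e13.1].
  - have f13 : sseq B1 B3 by case: r13.
    have f23 : sseq B2 B3.
      case: r23 => // e23; case: e13; exact: sseq_trans e12 e23.
    by right; split; [apply: (sseq_trans f23 (sseq_sym f13)).1 | apply: f13.2].
  - have f12 : sseq B1 B2 by case: r12.
    have f23 : sseq B2 B3.
      case: r23 => // e23; case: e12; exact: sseq_trans e13 (sseq_sym e23).
    by right; split; [apply: f12.2 | apply: (sseq_trans f12 f23).2].
  - have f12 : sseq B1 B2 by case: r12.
    have f13 : sseq B1 B3 by case: r13.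
    by right; split; [apply: f12.2 | apply: f13.2].
have [d hd] := exists_dim divK (scap_sub hH1.1 hW.1) (X := scap H1 W).
have [d' hd'] := exists_dim divK (scap_sub hB1.1 hW.1) (X := scap B1 W).
case: All => [[I12 I13]|[I21 I31]].
- have [dm md _] := star_dims divK hW hH1 k0 hd SU0 HU0.
  have : d = m \/ m = d.+1 by lia.
  have lH : forall U, lineset k W m H1 B1 U \/ lineset k W m H2 B2 U \/ lineset k W m H3 B3 U ->
      in_S k W m U /\ incl H1 U.
    move=> U [[[_ [HU _]] SU]|[[[_ [HU _]] SU]|[[_ [HU _]] SU]]]; split => // x hx; apply: HU.
      exact: I12. exact: I13.
  case=> e.
  + exists (fun U => in_S k W m U /\ incl H1 U); split.
      left; right; exists H1; split => //; split => //; by rewrite -e.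
    by split; [|split] => U hU; apply: lH; auto.
  + exists (fun U => has_dim U k /\ incl H1 U /\ incl U (ssum H1 W)); split.
      left; left; exists H1, d; do 3 (split => //).
    have g : forall U, in_S k W m U /\ incl H1 U ->
        has_dim U k /\ incl H1 U /\ incl U (ssum H1 W).
      move=> U [SU HU]; have [_ _ h] := star_dims divK hW hH1 k0 hd SU HU.
      by split; [exact: SU.1 | split => //; apply: h].
    by split; [|split] => U hU; apply: g; apply: lH; auto.
- have [md dm _] := top_dims divK hW hB1 hd' SU0 UB0.
  have : d' = m \/ d' = m.+1 by lia.
  have lB : forall U, lineset k W m H1 B1 U \/ lineset k W m H2 B2 U \/ lineset k W m H3 B3 U ->
      in_S k W m U /\ incl U B1.
    move=> U [[[_ [_ UB]] SU]|[[[_ [_ UB]] SU]|[[_ [_ UB]] SU]]]; split => // x hx.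
    - exact: I21 _ (UB _ hx).
    - exact: I31 _ (UB _ hx).
  case=> e.
  + exists (fun U => has_dim U k /\ incl (scap B1 W) U /\ incl U B1); split.
      right; left; exists B1; split => //; split; first by rewrite -e.
      done.
    have g : forall U, in_S k W m U /\ incl U B1 ->
        has_dim U k /\ incl (scap B1 W) U /\ incl U B1.
      move=> U [SU UB]; have [_ _ h] := top_dims divK hW hB1 hd' SU UB.
      by split; [exact: SU.1 | split => //; apply: h].
    by split; [|split] => U hU; apply: g; apply: lB; auto.
  + exists (fun U => in_S k W m U /\ incl U B1); split.
      right; right; exists B1; split => //; split => //; by rewrite -e.
    by split; [|split] => U hU; apply: lB; auto.
Qed.
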